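(* Let $S$ (students) and $C$ (colleges) be finite disjoint sets with preferences and capacities as described in the context, and let $\mu,\mu'$ be two stable many-to-one matchings on $S\cup C$. Suppose $s\in S$ satisfies $\mu'(s)\succ_s\mu(s)$. Then $s$ belongs to a preference cycle $s_0c_0s_1c_1\dots s_kc_ks_0$ which is $(S,\mu)$-dominated and $(S,\mu')$-dominating, and every college $c_i$ in this cycle satisfies $|\mu(c_i)|=|\mu'(c_i)|=q_{c_i}$.
   Context: Each student $s\in S$ has a strict preference order $\succ_s$ over $C\cup\{\emptyset\}$, $\emptyset$ being the outside option. Each college $c\in C$ has a capacity $q_c\in\mathbb{Z}_{\geq 1}$ and a strict ranking $\succ_c$ over $S\cup\{\emptyset\}$; $c$ likes $s$ if $s\succ_c\emptyset$. College preferences over sets of students are responsive to this ranking: for any set $A\subseteq S$ and distinct $s_1,s_2\notin A$, $c$ prefers $A\cup\{s_1\}$ to $A\cup\{s_2\}$ iff $s_1\succ_c s_2$. A many-to-one matching is a map $\mu$ with $\mu(s)\in C\cup\{\emptyset\}$ for $s\in S$ and $\mu(c)=\{s\in S:\mu(s)=c\}$ for $c\in C$. It is individually rational if $\mu(s)\succ_s\emptyset$ whenever $\mu(s)\neq\emptyset$, every $c$ likes every student in $\mu(c)$, and $|\mu(c)|\le q_c$ for all $c$. A pair $(s,c)\in S\times C$ blocks $\mu$ if $c\succ_s\mu(s)$ and either $s\succ_c s'$ for some $s'\in\mu(c)$, or $c$ likes $s$ and $|\mu(c)|<q_c$. $\mu$ is stable if it is individually rational and has no blocking pair. A preference cycle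 is a cyclic list $s_0c_0s_1c_1\dots s_kc_ks_0$ of pairwise distinct agents, $s_i\in S$, $c_i\in C$, such that each agent strictly prefers (according to its ranking) its successor in the cycle to its predecessor. For a matching $\mu$ and $X\in\{S,C\}$, a preference cycle is $(X,\mu)$-dominated if for every agent $a\in X$ in the cycle: if $a\in S$, its predecessor is $\mu(a)$; if $a\in C$, its predecessor belongs to $\mu(a)$. It is $(X,\mu)$-dominating if the same holds with ''successor'' in place of ''predecessor''. *)

(* Defs.v *)
From mathcomp Require Import all_boot.
Set Implicit Arguments. Unset Strict Implicit. Unset Printing Implicit Defensive.

(* A strict (total) preference order given as a boolean relation:
   r x y  means  "x is strictly preferred to y". *)
Definition strict_total_order (T : eqType) (r : rel T) : Prop :=
  irreflexive r /\ transitive r /\ (forall x y, x != y -> r x y || r y x).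

Section Matching.
Variables (S C : finType).
(* prefS s x y : x ≻_s y on C ∪ {∅} (None = outside option ∅)
   prefC c x y : x ≻_c y on S ∪ {∅} (None = ∅) *)
Variables (prefS : S -> rel (option C)) (prefC : C -> rel (option S))
          (q : C -> nat).

(* a many-to-one matching is given by mu : S -> option C; mu(c) is: *)
Definition assigned (mu : S -> option C) (c : C) : {set S} :=
  [set s | mu s == Some c].

Definition likes (c : C) (s : S) : bool := prefC c (Some s) None.

Definition indiv_rational (mu : S -> option C) : Prop :=
  (forall s c, mu s = Some c -> prefS s (Some c) None) /\
  (forall c s, s \in assigned mu c -> likes c s) /\
  (forall c, #|assigned mu c| <= q c).

Definition blocks (mu : S -> option C) (s : S) (c : C) : Prop :=
  prefS s (Some c) (mu s) /\
  ((exists2 s', s' \in assigned mu c & prefC c (Some s) (Some s')) \/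
   (likes c s /\ #|assigned mu c| < q c)).

Definition stable (mu : S -> option C) : Prop :=
  indiv_rational mu /\ forall s c, ~ blocks mu s c.

(* A preference cycle s_0 c_0 s_1 c_1 ... s_k c_k s_0, given by
   sc i = s_i and cc i = c_i for i : 'I_k.+1 (indices mod k+1).
   In the cycle, the predecessor of s_i is c_{i-1} and its successor is c_i;
   the predecessor of c_i is s_i and its successor is s_{i+1}. *)
Definition pref_cycle (k : nat) (sc : 'I_k.+1 -> S) (cc : 'I_k.+1 -> C) : Prop :=
  injective sc /\ injective cc /\
  (forall i, prefS (sc i) (Some (cc i)) (Some (cc (ord_pred i)))) /\
  (forall i, prefC (cc i) (Some (sc (ordS i))) (Some (sc i))).

Definition S_dominated (mu : S -> option C) (k : nat)
    (sc : 'I_k.+1 -> S) (cc : 'I_k.+1 -> C) : Prop :=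
  forall i, mu (sc i) = Some (cc (ord_pred i)).

Definition S_dominating (mu : S -> option C) (k : nat)
    (sc : 'I_k.+1 -> S) (cc : 'I_k.+1 -> C) : Prop :=
  forall i, mu (sc i) = Some (cc i).

End Matching.

(* Main.v *)
Require Import Defs.
From mathcomp Require Import all_boot zify.

Section Shortcut.
Variables (T K : eqType) (R : rel T) (key : T -> K) (x0 : T).
Hypothesis hR : forall a b a' b', R a b -> R a' b' -> key a = key a' -> R a' b.

Lemma shortcut k (t : nat -> T) : t 0 = x0 -> t k.+1 = x0 ->
  (forall m, m <= k -> R (t m) (t m.+1)) ->
  exists k' (t' : nat -> T), [/\ t' 0 = x0, t' k'.+1 = x0,
    (forall m, m <= k' -> R (t' m) (t' m.+1)) &
    forall i j, i <= k' -> j <= k' -> key (t' i) = key (t' j) -> i = j].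
Proof.
elim: k {-2}k (leqnn k) t => [|N IH] k hk t h0 hk1 hst.
  have k0 : k = 0 by lia.
  subst k; exists 0, t; split => // i j hi hj _; lia.
have [/existsP [i /existsP [j /andP [hij /eqP hkey]]]|hno] :=
  boolP [exists i : 'I_k.+1, exists j : 'I_k.+1, (i < j) && (key (t i) == key (t j))].
  pose t' m := if m <= i then t m else t (m + (j - i)).
  have hi := ltn_ord i; have hj := ltn_ord j.
  have := IH (k - (j - i)) ltac:(lia) t'.
  case.
  - by rewrite /t'.
  - rewrite /t' ifF; last by apply/negbTE; lia.
    by have -> : (k - (j - i)).+1 + (j - i) = k.+1 by lia.
  - move=> m hm; rewrite /t'.
    case: (ltngtP m i) => hmi.
    + apply: hst; lia.
    + have -> : m.+1 + (j - i) = (m + (j - i)).+1 by lia.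
      apply: hst; lia.
    + subst m; have -> : i.+1 + (j - i) = j.+1 by lia.
      apply: (hR (t j) (t j.+1) (t i) (t i.+1)); [apply: hst; lia| apply: hst; lia| by []].
  - move=> k' [t'' [H1 H2 H3 H4]]; by exists k', t''.
exists k, t; split => // i j hi hj hkey.
case: (ltngtP i j) => // hij; exfalso; move/negP: hno; apply.
  apply/existsP; exists (@Ordinal k.+1 i ltac:(lia)).
  apply/existsP; exists (@Ordinal k.+1 j ltac:(lia)).
  by rewrite /= hij hkey eqxx.
apply/existsP; exists (@Ordinal k.+1 j ltac:(lia)).
apply/existsP; exists (@Ordinal k.+1 i ltac:(lia)).
by rewrite /= hij hkey eqxx.
Qed.
End Shortcut.
Set Implicit Arguments. Unset Strict Implicit. Unset Printing Implicit Defensive.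
Section Main.
Variables (S C : finType)
    (prefS : S -> rel (option C)) (prefC : C -> rel (option S)) (q : C -> nat).
Hypothesis (hS : forall s, strict_total_order (prefS s)).
Hypothesis (hC : forall c, strict_total_order (prefC c)).
Variables (mu mu' : S -> option C).
Hypothesis (hmu : stable prefS prefC q mu) (hmu' : stable prefS prefC q mu').
Definition better x := prefS x (mu' x) (mu x).

Lemma irrS x o : prefS x o o = false.
Proof. by case: (hS x) => H _; apply: H. Qed.
Lemma irrC c o : prefC c o o = false.
Proof. by case: (hC c) => H _; apply: H. Qed.
Lemma trS x a b c : prefS x a b -> prefS x b c -> prefS x a c.
Proof. case: (hS x) => _ [H _]; exact: H. Qed.
Lemma totS x a b : a != b -> prefS x a b || prefS x b a.
Proof. case: (hS x) => _ [_ H]; exact: H. Qed.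
Lemma totC c a b : a != b -> prefC c a b || prefC c b a.
Proof. case: (hC c) => _ [_ H]; exact: H. Qed.

Lemma better_some x : better x -> exists c, mu' x = Some c.
Proof.
rewrite /better; case E : (mu' x) => [c|]; first by exists c.
case E2 : (mu x) => [d|]; last by rewrite irrS.
move=> h; have h2 : prefS x (Some d) None by case: hmu => [[H _] _]; exact: H.
by have := trS h h2; rewrite irrS.
Qed.

Lemma better_neq x : better x -> mu' x <> mu x.
Proof. by rewrite /better => h E; rewrite E irrS in h. Qed.

Lemma in_assigned (m : S -> option C) c x : (x \in assigned m c) = (m x == Some c).
Proof. by rewrite inE. Qed.

Lemma full_mu x c : better x -> mu' x = Some c ->
  #|assigned mu c| = q c /\ forall y, y \in assigned mu c -> prefC c (Some y) (Some x).
Proof.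
move=> hb hc.
have hl : likes prefC c x.
  case: hmu' => [[_ [H _]] _]; apply: H; by rewrite in_assigned hc.
have nb := (proj2 hmu) x c.
have hp : prefS x (Some c) (mu x) by rewrite -hc.
split.
  apply/eqP; rewrite eqn_leq; case: hmu => [[_ [_ ->]] _] /=.
  rewrite leqNgt; apply/negP => hlt; apply: nb; split => //; right; by split.
move=> y hy.
have hyx : Some y != Some x.
  apply/eqP => [[E]]; subst y; apply: (better_neq hb); rewrite hc.
  by move: hy; rewrite in_assigned => /eqP.
case/orP: (totC c hyx) => // h; exfalso; apply: nb; split => //; left; by exists y.
Qed.

Lemma out_better x c y : better x -> mu' x = Some c -> y \in assigned mu c ->
  mu' y != Some c -> better y.
Proof.
move=> hb hc hy hny.
have [_ H] := full_mu hb hc.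
have hyx := H y hy.
have nb := (proj2 hmu') y c.
have hmy : mu y = Some c by move: hy; rewrite in_assigned => /eqP.
rewrite /better hmy.
have := totS y hny; case/orP => // h; exfalso; apply: nb; split; first by [].
left; exists x => //; by rewrite in_assigned hc.
Qed.


Definition In c := assigned mu' c :\: assigned mu c.
Definition Out c := assigned mu c :\: assigned mu' c.
Definition B := [set x | better x].
Definition X := [set c | [exists x, better x && (mu' x == Some c)]].

Lemma sum_part (f : S -> option C) (A : {set S}) (Y : {set C}) (c0 : C) :
  \sum_(c in Y) #|[set x in A | f x == Some c]| =
  #|[set x in A | [exists c in Y, f x == Some c]]|.
Proof.
rewrite -sum1_card (partition_big (fun x => odflt c0 (f x)) (mem Y)).
  apply: eq_bigr => c hc; rewrite -sum1_card; apply: eq_bigl => x; rewrite !inE.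
  case: (x \in A) => //=; case E: (f x) => [d|] /=.
    apply/eqP/andP.
      case=> ->; split => //; apply/existsP; exists c; by rewrite hc eqxx.
    by case=> _ /eqP ->.
  apply/esym/negbTE; rewrite negb_and; apply/orP; left; apply/negP => /existsP [e /andP [_ //]].
move=> x; rewrite !inE => /andP [_ /existsP [e /andP [he /eqP ->]]] //.
Qed.

Lemma inX x c : better x -> mu' x = Some c -> c \in X.
Proof. move=> hb hc; rewrite inE; apply/existsP; exists x; by rewrite hb hc eqxx. Qed.

Lemma X_full c : c \in X -> #|assigned mu c| = q c.
Proof.
rewrite inE => /existsP [x /andP [hb /eqP hc]]; exact: (full_mu hb hc).1.
Qed.

Lemma Out_better c : c \in X -> forall y, y \in Out c -> better y.
Proof.
rewrite inE => /existsP [x /andP [hb /eqP hc]] y; rewrite inE => /andP [h1 h2].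
apply: (out_better hb hc h2); by rewrite -in_assigned.
Qed.

Lemma inout_le c : c \in X -> #|In c| <= #|Out c|.
Proof.
move=> hX; rewrite /In /Out !cardsD setIC X_full //.
have : #|assigned mu' c| <= q c by case: hmu' => [[_ [_ ->]] _].
lia.
Qed.

Lemma inout_eq (c0 : C) c : c \in X -> #|In c| = #|Out c|.
Proof.
have h1 : \sum_(c in X) #|Out c| <= #|B|.
  apply: leq_trans (_ : \sum_(c in X) #|[set x in B | mu x == Some c]| <= _).
    apply: leq_sum => d hd; apply: subset_leq_card; apply/subsetP => y hy.
    rewrite !inE (Out_better hd hy) /=; move: hy; by rewrite !inE => /andP [_ ->].
  rewrite (sum_part _ _ _ c0); apply: subset_leq_card; apply/subsetP => y.
  by rewrite inE => /andP [].
have h2 : #|B| <= \sum_(c in X) #|In c|.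
  apply: (@leq_trans (\sum_(c in X) #|[set x in B | mu' x == Some c]|)).
    rewrite (sum_part _ _ _ c0); apply: subset_leq_card; apply/subsetP => y hy.
    rewrite inE hy /=; move: hy; rewrite inE => hb.
    have [e he] := better_some hb; apply/existsP; exists e; by rewrite (inX hb he) he eqxx.
  apply: leq_sum => d hd; apply: subset_leq_card; apply/subsetP => y.
  rewrite !inE => /andP [hb /eqP hy]; rewrite hy eqxx andbT.
  apply/eqP => E; apply: (better_neq hb); by rewrite hy E.
have [_ E] := @leqif_sum _ (mem X) (fun c => #|In c| == #|Out c|) (fun c => #|In c|) (fun c => #|Out c|) (fun c hc => leqif_eq (inout_le hc)).
have : \sum_(c in X) #|In c| == \sum_(c in X) #|Out c|.
  rewrite eqn_leq; apply/andP; split; first by apply: leq_sum => d hd; exact: inout_le.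
  exact: leq_trans h1 h2.
by rewrite E => /forall_inP H hc; apply/eqP; apply: H.
Qed.


Definition g (d : S) x :=
  if better x then
    (if mu' x is Some c then nth d (enum (Out c)) (index x (enum (In c))) else x)
  else x.

Lemma x_in_In x c : better x -> mu' x = Some c -> x \in In c.
Proof.
move=> hb hc; rewrite !inE hc eqxx andbT; apply/eqP => E; apply: (better_neq hb).
by rewrite hc E.
Qed.

Lemma idx_lt x c : better x -> mu' x = Some c ->
  index x (enum (In c)) < size (enum (Out c)).
Proof.
move=> hb hc; rewrite -cardE -(inout_eq c (inX hb hc)) cardE index_mem mem_enum.
exact: x_in_In.
Qed.

Lemma g_prop d x c : better x -> mu' x = Some c -> g d x \in Out c.
Proof.
move=> hb hc; rewrite /g hb hc -mem_enum; apply: mem_nth; exact: idx_lt.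
Qed.

Lemma g_better d x : better x -> better (g d x).
Proof.
move=> hb; have [c hc] := better_some hb.
exact: (Out_better (inX hb hc) (g_prop d hb hc)).
Qed.

Lemma g_mu d x : better x -> mu (g d x) = mu' x.
Proof.
move=> hb; have [c hc] := better_some hb.
have := g_prop d hb hc; rewrite hc !inE => /andP [_ /eqP] //.
Qed.

Lemma g_inj d : {in B &, injective (g d)}.
Proof.
move=> x y; rewrite !inE => hx hy E.
have [c hc] := better_some hx; have [e he] := better_some hy.
have := g_mu d hx; rewrite E g_mu // hc he => [[ce]]; subst e.
move: E; rewrite /g hx hy hc he => /eqP.
rewrite nth_uniq ?enum_uniq ?idx_lt // => /eqP E.
rewrite -(nth_index d (_ : x \in enum (In c))) ?mem_enum ?x_in_In // E.
by rewrite nth_index // mem_enum x_in_In.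
Qed.

End Main.

Unset Implicit Arguments.

Theorem lemma3 (S C : finType)
    (prefS : S -> rel (option C)) (prefC : C -> rel (option S)) (q : C -> nat)
    (hS : forall s, strict_total_order (prefS s))
    (hC : forall c, strict_total_order (prefC c))
    (hq : forall c, 1 <= q c)
    (mu mu' : S -> option C)
    (hmu : stable prefS prefC q mu) (hmu' : stable prefS prefC q mu')
    (s : S) (hs : prefS s (mu' s) (mu s)) :
  exists (k : nat) (sc : 'I_k.+1 -> S) (cc : 'I_k.+1 -> C),
    [/\ pref_cycle prefS prefC sc cc,
        exists i, sc i = s,
        S_dominated mu sc cc,
        S_dominating mu' sc cc &
        forall i, #|assigned mu (cc i)| = q (cc i) /\
                  #|assigned mu' (cc i)| = q (cc i)].
Proof.
have hbs : better prefS mu mu' s by [].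
have [c0 hc0] := better_some hS hmu hbs.
pose g0 := g prefS mu mu' s.
have hom : {homo g0 : x / x \in B prefS mu mu'}.
  by move=> x; rewrite /B !inE => hx; exact: (g_better hS hC hmu hmu').
have hit := iter_order_in hom (g_inj hS hC hmu hmu' (d:=s)) (_ : s \in B prefS mu mu').
have {}hit := hit ltac:(by rewrite inE).
pose t m := iter m g0 s.
have tb : forall m, better prefS mu mu' (t m).
  elim=> [|m IH] //=; exact: (g_better hS hC hmu hmu').
pose Rel x y := better prefS mu mu' x && (mu y == mu' x).
have step : forall m, Rel (t m) (t m.+1).
  move=> m; rewrite /Rel tb /= /t; apply/eqP; exact: (g_mu hS hC hmu hmu' s (tb m)).
have [k' [t' [H0 Hk Hstep Hdist]]] :
  exists k' (t' : nat -> S), [/\ t' 0 = s, t' k'.+1 = s,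
    (forall m, m <= k' -> Rel (t' m) (t' m.+1)) &
    forall i j, i <= k' -> j <= k' -> mu' (t' i) = mu' (t' j) -> i = j].
  apply: (@shortcut S _ Rel mu' s _ (order g0 s).-1 t).
  - move=> a b a' b' /andP [ha /eqP hb] /andP [ha' _] E; by rewrite /Rel ha' hb E eqxx.
  - by [].
  - by rewrite prednK ?order_gt0.
  - by move=> m _; apply: step.
pose sc (i : 'I_k'.+1) := t' i.
pose cc (i : 'I_k'.+1) := odflt c0 (mu' (t' i)).
have hR : forall i : 'I_k'.+1, Rel (sc i) (sc (ordS i)).
  move=> i; rewrite /sc /=.
  have hi := ltn_ord i.
  case: (ltngtP i.+1 k'.+1) => h.
  - rewrite modn_small //; apply: Hstep; lia.
  - lia.
  - rewrite h modnn H0 -Hk; have E : nat_of_ord i = k' by lia.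
    by have := Hstep i ltac:(lia); rewrite E.
have hb : forall i, better prefS mu mu' (sc i) by move=> i; case/andP: (hR i).
have hmu'i : forall i, mu' (sc i) = Some (cc i).
  move=> i; have [c hc] := better_some hS hmu (hb i); by rewrite /cc -/(sc i) hc.
have hmui : forall i, mu (sc (ordS i)) = Some (cc i).
  move=> i; case/andP: (hR i) => _ /eqP ->; exact: hmu'i.
have hmup : forall i, mu (sc i) = Some (cc (ord_pred i)).
  move=> i; by rewrite -hmui ord_predK.
have keyinj : forall i j : 'I_k'.+1, mu' (sc i) = mu' (sc j) -> i = j.
  move=> i j E; apply: val_inj; apply: Hdist => //; rewrite -ltnS; exact: ltn_ord.
exists k', sc, cc; split.
- split; [|split; [|split]].
  + move=> i j E; apply: keyinj; by rewrite E.
  + move=> i j E; apply: keyinj; by rewrite !hmu'i E.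
  + move=> i; have := hb i; by rewrite /better hmu'i hmup.
  + move=> i; have [_ H] := full_mu hS hC hmu hmu' (hb i) (hmu'i i).
    apply: H; by rewrite inE hmui.
- by exists ord0.
- exact: hmup.
- exact: hmu'i.
- move=> i; have [Hf _] := full_mu hS hC hmu hmu' (hb i) (hmu'i i).
  split => //.
  have E := inout_eq hS hC hmu hmu' c0 (inX (hb i) (hmu'i i)).
  move: E; rewrite /In /Out !cardsD setIC Hf.
  have : #|assigned mu' (cc i)| <= q (cc i) by case: hmu' => [[_ [_ ->]] _].
  have : #|assigned mu' (cc i) :&: assigned mu (cc i)| <= #|assigned mu' (cc i)|.
    by apply: subset_leq_card; apply: subsetIl.
  have : #|assigned mu' (cc i) :&: assigned mu (cc i)| <= #|assigned mu (cc i)|.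
    by apply: subset_leq_card; apply: subsetIr.
  rewrite Hf [assigned mu (cc i) :&: _]setIC; lia.
Qed.
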